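(* Let $m\geq 3$ be odd, $n=3m$, and let $\mathcal{L}_n$ be the latin square defined below. Every transversal of $\mathcal{L}_n$ contains at least one entry of the block $A_{22}$.
   Context: A latin square of order $n$ is viewed as its set of entries $(r,c,s)$ (symbol $s$ in row $r$, column $c$); a transversal is a set of $n$ entries containing each row, column and symbol exactly once. Let $m\ge3$ be odd and $n=3m$. The latin square $\mathcal{L}_n$ has rows, columns and symbols in $\{0,1,\dots,n-1\}$ and is partitioned into nine $m\times m$ blocks $A_{ij}$, $i,j\in\{1,2,3\}$: for $a,b\in\{0,\dots,m-1\}$, the cell in row $(i-1)m+a$ and column $(j-1)m+b$ contains $A_{ij}[a,b]$. Writing $t$ for the residue of $a+b$ modulo $m$ in $\{0,\dots,m-1\}$, $A_{ij}[a,b]=t$ if $t\neq 0$ and $i+j\equiv 2\pmod 3$; $A_{ij}[a,b]=t+m$ if $t\neq m-1$ and $i+j\equiv 0\pmod 3$; $A_{ij}[a,b]=t+2m$ if $t\neq m-1$ and $i+j\equiv1\pmod3$; $A_{ij}[a,b]=0$ if $t=0$ and $(i,j)=(1,1)$; $A_{ij}[a,b]=2m-1$ if $t=0$ and $(i,j)=(2,3)$; $A_{ij}[a,b]=3m-1$ if $t=0$ and $(i,j)=(3,2)$; $A_{ij}[a,b]=0$ if $t=m-1$ and $(i,j)\in\{(2,2),(3,3)\}$; $A_{ij}[a,b]=2m-1$ if $t=m-1$ and $(i,j)\in\{(1,2),(3,1)\}$; $A_{ij}[a,b]=3m-1$ if $t=m-1$ and $(i,j)\in\{(1,3),(2,1)\}$.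 An entry of $\mathcal{L}_n$ is said to be in block $A_{ij}$ if its cell lies in that block. *)

(* Defs.v *)
From mathcomp Require Import all_boot.
Set Implicit Arguments. Unset Strict Implicit. Unset Printing Implicit Defensive.

(* Block entry A_ij[a,b] for block indices i j in {1,2,3}, with m the block size. *)
Definition blockA (m i j a b : nat) : nat :=
  let t := (a + b) %% m in
  let s := (i + j) %% 3 in
  if (t != 0) && (s == 2) then t
  else if (t != m.-1) && (s == 0) then t + m
  else if (t != m.-1) && (s == 1) then t + 2 * m
  else if (t == 0) && (i == 1) && (j == 1) then 0
  else if (t == 0) && (i == 2) && (j == 3) then 2 * m - 1
  else if (t == 0) && (i == 3) && (j == 2) then 3 * m - 1
  else if (t == m.-1) && (((i == 2) && (j == 2)) || ((i == 3) && (j == 3))) then 0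
  else if (t == m.-1) && (((i == 1) && (j == 2)) || ((i == 3) && (j == 1))) then 2 * m - 1
  else if (t == m.-1) && (((i == 1) && (j == 3)) || ((i == 2) && (j == 1))) then 3 * m - 1
  else 0.

(* Symbol of L_n (n = 3m) in row r, column c: row r = (i-1)m + a, column c = (j-1)m + b. *)
Definition Lsym (m r c : nat) : nat :=
  blockA m (r %/ m).+1 (c %/ m).+1 (r %% m) (c %% m).

Definition Lentries (m : nat) : {set 'I_(3 * m) * 'I_(3 * m) * 'I_(3 * m)} :=
  [set e : 'I_(3 * m) * 'I_(3 * m) * 'I_(3 * m) | nat_of_ord e.2 == Lsym m e.1.1 e.1.2].

Definition is_latin_transversal (m : nat) (T : {set 'I_(3 * m) * 'I_(3 * m) * 'I_(3 * m)}) : Prop :=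
  [/\ T \subset Lentries m, #|T| = 3 * m,
      forall r : 'I_(3 * m), #|[set e in T | e.1.1 == r]| = 1,
      forall c : 'I_(3 * m), #|[set e in T | e.1.2 == c]| = 1 &
      forall s : 'I_(3 * m), #|[set e in T | e.2 == s]| = 1].

Definition in_A22 (m : nat) (e : 'I_(3 * m) * 'I_(3 * m) * 'I_(3 * m)) : bool :=
  (e.1.1 %/ m == 1) && (e.1.2 %/ m == 1).

(* Main.v *)
Require Import Defs.
From mathcomp Require Import all_boot zify.

Definition xb m i j (r c : nat) : nat := (r %/ m == i) && (c %/ m == j).
Definition sp m i j k (r c s : nat) : nat := (r %/ m == i) && (c %/ m == j) && (s == k).

Lemma dmq m q x : 0 < m -> x < m -> ((q * m + x) %/ m = q) * ((q * m + x) %% m = x).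
Proof. move=> hm hx; rewrite divnMDl // divn_small // addn0 modnMDl modn_small //. Qed.
Lemma dm0 m t : t < m -> (t %/ m = 0) * (t %% m = t).
Proof. by move=> h; rewrite divn_small // modn_small. Qed.
Lemma dm1 m t : t < m -> ((t + m) %/ m = 1) * ((t + m) %% m = t).
Proof. move=> h; rewrite (_ : t + m = 1 * m + t) ?dmq //; lia. Qed.
Lemma dm2 m t : t < m -> ((t + 2 * m) %/ m = 2) * ((t + 2 * m) %% m = t).
Proof. move=> h; rewrite (_ : t + 2 * m = 2 * m + t) ?dmq //; lia. Qed.
Lemma dmA m : 0 < m -> ((2 * m - 1) %/ m = 1) * ((2 * m - 1) %% m = m.-1).
Proof. move=> h; rewrite (_ : 2 * m - 1 = 1 * m + m.-1) ?dmq //; lia. Qed.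
Lemma dmB m : 0 < m -> ((3 * m - 1) %/ m = 2) * ((3 * m - 1) %% m = m.-1).
Proof. move=> h; rewrite (_ : 3 * m - 1 = 2 * m + m.-1) ?dmq //; lia. Qed.
Ltac c3 := repeat match goal with |- context[(?x + ?y) %% 3] =>
  let v := eval compute in ((x + y) %% 3) in change ((x + y) %% 3) with v end.

Lemma entry_ij m i j a b : 3 <= m -> i < 3 -> j < 3 -> a < m -> b < m ->
  ~~ ((i == 1) && (j == 1)) ->
  let r := i * m + a in let c := j * m + b in let s := Lsym m r c in
  let x := fun i' j' => xb m i' j' r c in
  let E23 := sp m 1 2 (2 * m - 1) r c s in
  let E32 := sp m 2 1 (3 * m - 1) r c s in
  let F33 := sp m 2 2 0 r c s in
  let F11 := sp m 0 0 0 r c s in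
  let H21 := sp m 1 0 (3 * m - 1) r c s in
  let K31 := sp m 2 0 (2 * m - 1) r c s in
  [/\ (s %/ m == 0) + E23 + E32 = x 0 0 + x 1 2 + x 2 1 + F33,
      (s %/ m == 2) + K31 = x 0 2 + x 2 0 + H21 + E32,
      (s == 0) = F11 + F33 :> nat,
      E32 + H21 <= (s == 3 * m - 1) /\ E23 <= (s == 2 * m - 1) &
      a + b + (m - 1) * (E23 + E32) + F33 = s %% m + m * ((a + b) %/ m + F33)].
Proof.
move=> hm hi hj ha hb hij r c s x E23 E32 F33 F11 H21 K31.
have m0 : 0 < m by lia.
have [Dr Mr] := dmq m i a m0 ha. have [Dc Mc] := dmq m j b m0 hb.
rewrite /E23 /E32 /F33 /F11 /H21 /K31 /x /xb /sp /s /Lsym /r /c Dr Mr Dc Mc /blockA.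
clear K31 H21 F11 F33 E32 E23 x s r c.
have := divn_eq (a + b) m.
have : (a + b) %/ m < 2 by rewrite ltn_divLR //; lia.
have : (a + b) %% m < m by rewrite ltn_mod.
move: ((a + b) %/ m) ((a + b) %% m) => q t ht hq hab.
have hq' : q = 0 \/ q = 1 by lia.
clear hq.
have := dm0 _ _ ht; have := dm1 _ _ ht; have := dm2 _ _ ht; have := dmA _ m0; have := dmB _ m0.
move=> [D5 M5] [D4 M4] [D2 M2] [D1 M1] [D0 M0].
case: (t =P 0) => h0.
all: case: (t =P m.-1) => h1.
all: try (exfalso; clear -h0 h1 hm; lia).
all: case: i hi hij {Dr Mr} => [|[|[|i]]] //= _;
     case: j hj {Dc Mc} => [|[|[|j]]] //= _ _; c3 => /=.
all: rewrite ?D0 ?M0 ?D1 ?M1 ?D2 ?M2 ?D4 ?M4 ?D5 ?M5 ?div0n ?mod0n.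
all: clear D0 M0 D1 M1 D2 M2 D4 M4 D5 M5 m0.
all: case: hq' => ?; subst q.
all: (repeat split); lia.
Qed.


Lemma shiftS m n (f : nat -> nat) :
  \sum_(m <= i < m + n) f i = \sum_(0 <= i < n) f (i + m).
Proof. by rewrite -{1}[m]add0n big_addn addKn. Qed.

Lemma split3 m (f : nat -> nat) :
  \sum_(x < 3 * m) f x = \sum_(a < m) (f a + f (a + m) + f (a + 2 * m)).
Proof.
rewrite -(big_mkord xpredT f) (_ : 3 * m = m + m + m); last by lia.
rewrite (big_cat_nat (n := m + m)) ?leq_addl ?leq_addr //.
rewrite (big_cat_nat (n := m)) ?leq_addl ?leq_addr //.
rewrite /= (shiftS m m) (shiftS (m + m) m) !big_mkord -!big_split /=.
by apply: eq_bigr => a _; rewrite (_ : 2 * m = m + m) //; lia.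
Qed.

Lemma sum_eqk n k : \sum_(x < n) ((x : nat) == k : nat) = (k < n).
Proof.
elim: n => [|n IH]; first by rewrite big_ord0.
rewrite big_ord_recr /= IH; case: eqP => [->|h]; lia.
Qed.

Lemma sum_id2 m : 2 * \sum_(a < m) a = m * m.-1.
Proof.
elim: m => [|m IH]; first by rewrite big_ord0.
rewrite big_ord_recr /= mulnDr IH; case: m {IH} => //= m; lia.
Qed.

Lemma tsum n (T : {set 'I_n * 'I_n * 'I_n}) (p : 'I_n * 'I_n * 'I_n -> 'I_n)
  (f : nat -> nat) : (forall x, #|[set e in T | p e == x]| = 1) ->
  \sum_(e in T) f (p e) = \sum_(x < n) f x.
Proof.
move=> H; rewrite (partition_big p xpredT) //=; apply: eq_bigr => x _.
rewrite (eq_bigr (fun _ => f x)); last by move=> e /andP[_ /eqP->].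
rewrite sum_nat_const; have := H x; rewrite cardsE => ->; by rewrite mul1n.
Qed.

Lemma modarg m Q E F W : 3 <= m -> E <= 2 -> F <= 1 -> m * Q + (m - 1) * E + F = m * W -> F = E.
Proof.
move=> hm hE hF h.
have [hw|[hw|hw]] : W <= Q \/ W = Q.+1 \/ Q.+2 <= W by lia.
- have := leq_mul (leqnn m) hw; case: E hE h => [|[|[|]]] //= _; lia.
- subst W; move: h; rewrite mulnS; case: E hE => [|[|[|]]] //= _; lia.
- have := leq_mul (leqnn m) hw; rewrite !mulnS; case: E hE h => [|[|[|]]] //= _; lia.
Qed.

Lemma entry_rc m r c s : 3 <= m -> r < 3 * m -> c < 3 * m ->
  ~~ ((r %/ m == 1) && (c %/ m == 1)) -> s = Lsym m r c ->
  [/\ (r %/ m == 0 : nat) = xb m 0 0 r c + xb m 0 1 r c + xb m 0 2 r c,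
      (r %/ m == 1 : nat) = xb m 1 0 r c + xb m 1 2 r c,
      (r %/ m == 2 : nat) = xb m 2 0 r c + xb m 2 1 r c + xb m 2 2 r c,
      (c %/ m == 0 : nat) = xb m 0 0 r c + xb m 1 0 r c + xb m 2 0 r c &
      (c %/ m == 1 : nat) = xb m 0 1 r c + xb m 2 1 r c] /\
  [/\ (c %/ m == 2 : nat) = xb m 0 2 r c + xb m 1 2 r c + xb m 2 2 r c,
      sp m 0 0 0 r c s <= xb m 0 0 r c,
      sp m 2 2 0 r c s <= xb m 2 2 r c,
      (s %/ m == 0) + sp m 1 2 (2 * m - 1) r c s + sp m 2 1 (3 * m - 1) r c s
        = xb m 0 0 r c + xb m 1 2 r c + xb m 2 1 r c + sp m 2 2 0 r c s &
      (s %/ m == 2) + sp m 2 0 (2 * m - 1) r c s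
        = xb m 0 2 r c + xb m 2 0 r c + sp m 1 0 (3 * m - 1) r c s + sp m 2 1 (3 * m - 1) r c s] /\
  [/\ (s == 0 : nat) = sp m 0 0 0 r c s + sp m 2 2 0 r c s,
      sp m 2 1 (3 * m - 1) r c s + sp m 1 0 (3 * m - 1) r c s <= (s == 3 * m - 1),
      sp m 1 2 (2 * m - 1) r c s <= (s == 2 * m - 1) &
      r %% m + c %% m + (m - 1) * (sp m 1 2 (2 * m - 1) r c s + sp m 2 1 (3 * m - 1) r c s)
        + sp m 2 2 0 r c s
      = s %% m + m * ((r %% m + c %% m) %/ m + sp m 2 2 0 r c s)].
Proof.
move=> hm hr hc hij hs.
have m0 : 0 < m by lia.
have hi : r %/ m < 3 by rewrite ltn_divLR.
have hj : c %/ m < 3 by rewrite ltn_divLR.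
have := entry_ij _ _ _ _ _ hm hi hj (ltn_pmod r m0) (ltn_pmod c m0) hij.
cbv beta zeta; rewrite -!divn_eq -hs => -[h1 h2 h3 [h4 h5] h6].
have hsp : forall i j k, sp m i j k r c s <= xb m i j r c.
  by move=> i j k; rewrite /sp /xb; case: (r %/ m == i); case: (c %/ m == j); case: (s == k).
split; last split; last by split.
  by rewrite /xb; move: hij hi hj; case: (r %/ m) => [|[|[|]]] //;
     case: (c %/ m) => [|[|[|]]].
by split => //; rewrite /xb; move: hij hi hj; case: (r %/ m) => [|[|[|]]] //;
     case: (c %/ m) => [|[|[|]]].
Qed.

Lemma cnt_div m i : 0 < m -> i < 3 -> \sum_(x < 3 * m) (x %/ m == i : nat) = m.
Proof.
move=> m0 hi; rewrite (split3 m (fun x => (x %/ m == i : nat))) (eq_bigr (fun _ => 1)); first by rewrite sum_nat_const card_ord muln1.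
move=> a _; have ha := ltn_ord a.
have [D0 _] := dm0 _ _ ha; have [D1 _] := dm1 _ _ ha; have [D2 _] := dm2 _ _ ha.
rewrite D0 D1 D2; lia.
Qed.

Lemma cnt_mod m : 0 < m -> \sum_(x < 3 * m) x %% m = 3 * \sum_(a < m) a.
Proof.
move=> m0; rewrite (split3 m (fun x => x %% m)) big_distrr /=; apply: eq_bigr => a _; have ha := ltn_ord a.
have [_ D0] := dm0 _ _ ha; have [_ D1] := dm1 _ _ ha; have [_ D2] := dm2 _ _ ha.
rewrite D0 D1 D2; lia.
Qed.

Lemma sumMl (I : finType) (A : pred I) k (F : I -> nat) :
  \sum_(e in A) k * F e = k * \sum_(e in A) F e.
Proof. by rewrite big_distrr. Qed.

Theorem lemma13 (m : nat) (hm : 3 <= m) (hodd : odd m)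
  (T : {set 'I_(3 * m) * 'I_(3 * m) * 'I_(3 * m)}) :
  is_latin_transversal T -> exists2 e, e \in T & in_A22 e.
Proof.
move=> [Hsub Hcard Hr Hc Hs].
case: (pickP [pred e in T | in_A22 e]) => [e /andP[He HA]|H0]; first by exists e.
exfalso. have m0 : 0 < m by lia.
have HA : forall e, e \in T -> ~~ ((e.1.1 %/ m == 1) && (e.1.2 %/ m == 1)).
  by move=> e He; move: (H0 e) => /=; rewrite He /in_A22 => /negbT.
have HL : forall e, e \in T -> (e.2 : nat) = Lsym m e.1.1 e.1.2.
  by move=> e He; have := subsetP Hsub e He; rewrite inE => /eqP.
have EF := fun (e : 'I_(3 * m) * 'I_(3 * m) * 'I_(3 * m)) (He : e \in T) => entry_rc m e.1.1 e.1.2 e.2 hm (ltn_ord _) (ltn_ord _) (HA e He) (HL e He).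
have f0 : \sum_(e in T) ((e.1.1 %/ m == 0 : nat)) = \sum_(e in T) (xb m 0 0 e.1.1 e.1.2 + xb m 0 1 e.1.1 e.1.2 + xb m 0 2 e.1.1 e.1.2).
  apply: eq_bigr => e He; by have [[q1 q2 q3 q4 q5] [[q6 q7 q8 q9 q10] [q11 q12 q13 q14]]] := EF e He.
have f1 : \sum_(e in T) ((e.1.1 %/ m == 1 : nat)) = \sum_(e in T) (xb m 1 0 e.1.1 e.1.2 + xb m 1 2 e.1.1 e.1.2).
  apply: eq_bigr => e He; by have [[q1 q2 q3 q4 q5] [[q6 q7 q8 q9 q10] [q11 q12 q13 q14]]] := EF e He.
have f2 : \sum_(e in T) ((e.1.1 %/ m == 2 : nat)) = \sum_(e in T) (xb m 2 0 e.1.1 e.1.2 + xb m 2 1 e.1.1 e.1.2 + xb m 2 2 e.1.1 e.1.2).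
  apply: eq_bigr => e He; by have [[q1 q2 q3 q4 q5] [[q6 q7 q8 q9 q10] [q11 q12 q13 q14]]] := EF e He.
have f3 : \sum_(e in T) ((e.1.2 %/ m == 0 : nat)) = \sum_(e in T) (xb m 0 0 e.1.1 e.1.2 + xb m 1 0 e.1.1 e.1.2 + xb m 2 0 e.1.1 e.1.2).
  apply: eq_bigr => e He; by have [[q1 q2 q3 q4 q5] [[q6 q7 q8 q9 q10] [q11 q12 q13 q14]]] := EF e He.
have f4 : \sum_(e in T) ((e.1.2 %/ m == 1 : nat)) = \sum_(e in T) (xb m 0 1 e.1.1 e.1.2 + xb m 2 1 e.1.1 e.1.2).
  apply: eq_bigr => e He; by have [[q1 q2 q3 q4 q5] [[q6 q7 q8 q9 q10] [q11 q12 q13 q14]]] := EF e He.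
have f5 : \sum_(e in T) ((e.1.2 %/ m == 2 : nat)) = \sum_(e in T) (xb m 0 2 e.1.1 e.1.2 + xb m 1 2 e.1.1 e.1.2 + xb m 2 2 e.1.1 e.1.2).
  apply: eq_bigr => e He; by have [[q1 q2 q3 q4 q5] [[q6 q7 q8 q9 q10] [q11 q12 q13 q14]]] := EF e He.
have f6 : \sum_(e in T) ((e.2 %/ m == 0) + sp m 1 2 (2 * m - 1) e.1.1 e.1.2 e.2 + sp m 2 1 (3 * m - 1) e.1.1 e.1.2 e.2) = \sum_(e in T) (xb m 0 0 e.1.1 e.1.2 + xb m 1 2 e.1.1 e.1.2 + xb m 2 1 e.1.1 e.1.2 + sp m 2 2 0 e.1.1 e.1.2 e.2).
  apply: eq_bigr => e He; by have [[q1 q2 q3 q4 q5] [[q6 q7 q8 q9 q10] [q11 q12 q13 q14]]] := EF e He.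
have f7 : \sum_(e in T) ((e.2 %/ m == 2) + sp m 2 0 (2 * m - 1) e.1.1 e.1.2 e.2) = \sum_(e in T) (xb m 0 2 e.1.1 e.1.2 + xb m 2 0 e.1.1 e.1.2 + sp m 1 0 (3 * m - 1) e.1.1 e.1.2 e.2 + sp m 2 1 (3 * m - 1) e.1.1 e.1.2 e.2).
  apply: eq_bigr => e He; by have [[q1 q2 q3 q4 q5] [[q6 q7 q8 q9 q10] [q11 q12 q13 q14]]] := EF e He.
have f8 : \sum_(e in T) (((e.2 : nat) == 0 : nat)) = \sum_(e in T) (sp m 0 0 0 e.1.1 e.1.2 e.2 + sp m 2 2 0 e.1.1 e.1.2 e.2).
  apply: eq_bigr => e He; by have [[q1 q2 q3 q4 q5] [[q6 q7 q8 q9 q10] [q11 q12 q13 q14]]] := EF e He.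
have f9 : \sum_(e in T) (e.1.1 %% m + e.1.2 %% m + (m - 1) * (sp m 1 2 (2 * m - 1) e.1.1 e.1.2 e.2 + sp m 2 1 (3 * m - 1) e.1.1 e.1.2 e.2) + sp m 2 2 0 e.1.1 e.1.2 e.2) = \sum_(e in T) (e.2 %% m + m * ((e.1.1 %% m + e.1.2 %% m) %/ m + sp m 2 2 0 e.1.1 e.1.2 e.2)).
  apply: eq_bigr => e He; by have [[q1 q2 q3 q4 q5] [[q6 q7 q8 q9 q10] [q11 q12 q13 q14]]] := EF e He.
have g0 : \sum_(e in T) (sp m 0 0 0 e.1.1 e.1.2 e.2) <= \sum_(e in T) (xb m 0 0 e.1.1 e.1.2).
  apply: leq_sum => e He; by have [[q1 q2 q3 q4 q5] [[q6 q7 q8 q9 q10] [q11 q12 q13 q14]]] := EF e He.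
have g1 : \sum_(e in T) (sp m 2 2 0 e.1.1 e.1.2 e.2) <= \sum_(e in T) (xb m 2 2 e.1.1 e.1.2).
  apply: leq_sum => e He; by have [[q1 q2 q3 q4 q5] [[q6 q7 q8 q9 q10] [q11 q12 q13 q14]]] := EF e He.
have g2 : \sum_(e in T) (sp m 2 1 (3 * m - 1) e.1.1 e.1.2 e.2 + sp m 1 0 (3 * m - 1) e.1.1 e.1.2 e.2) <= \sum_(e in T) (((e.2 : nat) == 3 * m - 1 : nat)).
  apply: leq_sum => e He; by have [[q1 q2 q3 q4 q5] [[q6 q7 q8 q9 q10] [q11 q12 q13 q14]]] := EF e He.
have g3 : \sum_(e in T) (sp m 1 2 (2 * m - 1) e.1.1 e.1.2 e.2) <= \sum_(e in T) (((e.2 : nat) == 2 * m - 1 : nat)).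
  apply: leq_sum => e He; by have [[q1 q2 q3 q4 q5] [[q6 q7 q8 q9 q10] [q11 q12 q13 q14]]] := EF e He.
rewrite !big_split /= in f0 f1 f2 f3 f4 f5 f6 f7 f8 f9 g2.
rewrite !sumMl !big_split /= in f9.
have r0 : \sum_(e in T) (e.1.1 %/ m == 0 : nat) = m.
  by rewrite (tsum _ _ (fun e => e.1.1) (fun x => (x %/ m == 0 : nat)) Hr) cnt_div.
have c0 : \sum_(e in T) (e.1.2 %/ m == 0 : nat) = m.
  by rewrite (tsum _ _ (fun e => e.1.2) (fun x => (x %/ m == 0 : nat)) Hc) cnt_div.
have s0 : \sum_(e in T) (e.2 %/ m == 0 : nat) = m.
  by rewrite (tsum _ _ (fun e => e.2) (fun x => (x %/ m == 0 : nat)) Hs) cnt_div.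
have r1 : \sum_(e in T) (e.1.1 %/ m == 1 : nat) = m.
  by rewrite (tsum _ _ (fun e => e.1.1) (fun x => (x %/ m == 1 : nat)) Hr) cnt_div.
have c1 : \sum_(e in T) (e.1.2 %/ m == 1 : nat) = m.
  by rewrite (tsum _ _ (fun e => e.1.2) (fun x => (x %/ m == 1 : nat)) Hc) cnt_div.
have s1 : \sum_(e in T) (e.2 %/ m == 1 : nat) = m.
  by rewrite (tsum _ _ (fun e => e.2) (fun x => (x %/ m == 1 : nat)) Hs) cnt_div.
have r2 : \sum_(e in T) (e.1.1 %/ m == 2 : nat) = m.
  by rewrite (tsum _ _ (fun e => e.1.1) (fun x => (x %/ m == 2 : nat)) Hr) cnt_div.
have c2 : \sum_(e in T) (e.1.2 %/ m == 2 : nat) = m.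
  by rewrite (tsum _ _ (fun e => e.1.2) (fun x => (x %/ m == 2 : nat)) Hc) cnt_div.
have s2 : \sum_(e in T) (e.2 %/ m == 2 : nat) = m.
  by rewrite (tsum _ _ (fun e => e.2) (fun x => (x %/ m == 2 : nat)) Hs) cnt_div.
have z0 : \sum_(e in T) ((e.2 : nat) == 0 : nat) = 1.
  by rewrite (tsum _ _ (fun e => e.2) (fun x => (x == 0 : nat)) Hs) sum_eqk; lia.
have z1 : \sum_(e in T) ((e.2 : nat) == (2 * m - 1) : nat) = 1.
  by rewrite (tsum _ _ (fun e => e.2) (fun x => (x == (2 * m - 1) : nat)) Hs) sum_eqk; lia.
have z2 : \sum_(e in T) ((e.2 : nat) == (3 * m - 1) : nat) = 1.
  by rewrite (tsum _ _ (fun e => e.2) (fun x => (x == (3 * m - 1) : nat)) Hs) sum_eqk; lia.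
have ma : \sum_(e in T) (e.1.1 %% m) = 3 * \sum_(a < m) a.
  by rewrite (tsum _ _ (fun e => e.1.1) (fun x => x %% m) Hr) cnt_mod.
have mb : \sum_(e in T) (e.1.2 %% m) = 3 * \sum_(a < m) a.
  by rewrite (tsum _ _ (fun e => e.1.2) (fun x => x %% m) Hc) cnt_mod.
have mc : \sum_(e in T) (e.2 %% m) = 3 * \sum_(a < m) a.
  by rewrite (tsum _ _ (fun e => e.2) (fun x => x %% m) Hs) cnt_mod.
have hA := sum_id2 m.
have hk := odd_double_half m; rewrite hodd in hk.
have hAk : \sum_(a < m) a = m * m./2 by nia.
rewrite ma mb mc hAk in f9.
move: f0 f1 f2 f3 f4 f5 f6 f7 f8 f9 g0 g1 g2 g3 r0 r1 r2 c0 c1 c2 s0 s2 z0 z1 z2.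
move: (\sum_(e in T) (xb m 0 0 e.1.1 e.1.2)) => X00.
move: (\sum_(e in T) (xb m 0 1 e.1.1 e.1.2)) => X01.
move: (\sum_(e in T) (xb m 0 2 e.1.1 e.1.2)) => X02.
move: (\sum_(e in T) (xb m 1 0 e.1.1 e.1.2)) => X10.
move: (\sum_(e in T) (xb m 1 2 e.1.1 e.1.2)) => X12.
move: (\sum_(e in T) (xb m 2 0 e.1.1 e.1.2)) => X20.
move: (\sum_(e in T) (xb m 2 1 e.1.1 e.1.2)) => X21.
move: (\sum_(e in T) (xb m 2 2 e.1.1 e.1.2)) => X22.
move: (\sum_(e in T) (sp m 1 2 (2 * m - 1) e.1.1 e.1.2 e.2)) => E23.
move: (\sum_(e in T) (sp m 2 1 (3 * m - 1) e.1.1 e.1.2 e.2)) => E32.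
move: (\sum_(e in T) (sp m 2 2 0 e.1.1 e.1.2 e.2)) => F33.
move: (\sum_(e in T) (sp m 0 0 0 e.1.1 e.1.2 e.2)) => F11.
move: (\sum_(e in T) (sp m 1 0 (3 * m - 1) e.1.1 e.1.2 e.2)) => H21.
move: (\sum_(e in T) (sp m 2 0 (2 * m - 1) e.1.1 e.1.2 e.2)) => K31.
move: (\sum_(e in T) ((e.1.1 %/ m == 0 : nat))) => R0.
move: (\sum_(e in T) ((e.1.2 %/ m == 0 : nat))) => C0.
move: (\sum_(e in T) ((e.2 %/ m == 0 : nat))) => G0.
move: (\sum_(e in T) ((e.1.1 %/ m == 1 : nat))) => R1.
move: (\sum_(e in T) ((e.1.2 %/ m == 1 : nat))) => C1.
move: (\sum_(e in T) ((e.2 %/ m == 1 : nat))) => G1.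
move: (\sum_(e in T) ((e.1.1 %/ m == 2 : nat))) => R2.
move: (\sum_(e in T) ((e.1.2 %/ m == 2 : nat))) => C2.
move: (\sum_(e in T) ((e.2 %/ m == 2 : nat))) => G2.
move: (\sum_(e in T) (((e.2 : nat) == 0 : nat))) => Z0.
move: (\sum_(e in T) (((e.2 : nat) == (2 * m - 1) : nat))) => Z1.
move: (\sum_(e in T) (((e.2 : nat) == (3 * m - 1) : nat))) => Z2.
move: (\sum_(e in T) ((e.1.1 %% m + e.1.2 %% m) %/ m)) => W.
move=> f0 f1 f2 f3 f4 f5 f6 f7 f8 f9 g0 g1 g2 g3 r0 r1 r2 c0 c1 c2 s0 s2 z0 z1 z2.
have hF : F33 = E23 + E32.
  apply: (modarg m (3 * m./2) _ F33 (W + F33) hm); [lia|lia|].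
  rewrite mulnA (mulnC m 3) -mulnA; lia.
lia.
Qed.
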